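(* In the setting described in the context, let $X\in\mathcal{K}(\mathbb{R}^n)$ satisfy $X\cap\mathcal{D}_{\mathcal{A}}=\emptyset$, and let $(X_k)_{k\in\mathbb{Z}_+}\subset\mathcal{K}(\mathbb{R}^n)$ converge to $X$ in the Hausdorff distance. Then $\lim_{k\to\infty}\mathcal{V}(X_k)=\infty$.
   Context: Let $\|\cdot\|$ be a norm on $\mathbb{R}^n$ and $\mathrm{dist}(x,\Omega):=\inf_{y\in\Omega}\|x-y\|$. Let $\mathcal{K}(\mathbb{R}^n)$ denote the nonempty compact subsets of $\mathbb{R}^n$, with Hausdorff distance $d_H(X,Y):=\max\{\sup_{x\in X}\mathrm{dist}(x,Y),\sup_{y\in Y}\mathrm{dist}(y,X)\}$. Consider $x_{k+1}=f(x_k,u_k)$ with $f:\mathbb{R}^n\times\mathbb{R}^m\to\mathbb{R}^n$ continuous and inputs $u_k\in U$, $U\subset\mathbb{R}^m$ nonempty compact. For $x\in\mathbb{R}^n$ and $\pi:\mathbb{Z}_+\to U$, $\varphi_x^\pi(0)=x$, $\varphi_x^\pi(k+1)=f(\varphi_x^\pi(k),\pi(k))$; $\mathcal{R}(X,k):=\{\varphi_x^\pi(k):x\in X,\pi\in U^{\mathbb{Z}_+}\}$. Let $\mathcal{A}\in\mathcal{K}(\mathbb{R}^n)$ be controlled invariant. Assume local $\ell_p$-stabilizability: there exist $r>0$, $M\ge1$, $p>0$, $\lambda:[0,r]\times\mathbb{Z}_+\to\mathbb{R}_+$ such that (1) for each $k$, $s\mapsto\lambda(s,k)$ is continuous, nondecreasing,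 $\lambda(0,k)=0$; for each $s$, $k\mapsto\lambda(s,k)$ is nonincreasing, $\lambda(s,0)\le s$; (2) $\sum_{k}\lambda(r,k)^p<\infty$; (3) for every $x$ with $\mathrm{dist}(x,\mathcal{A})\le r$ there is $\pi\in U^{\mathbb{Z}_+}$ with $\mathrm{dist}(\varphi_x^\pi(k),\mathcal{A})\le M\lambda(\mathrm{dist}(x,\mathcal{A}),k)$ for all $k$. Let $\mathcal{D}_{\mathcal{A}}:=\{x:\exists\pi\in U^{\mathbb{Z}_+},\ \lim_{k\to\infty}\mathrm{dist}(\varphi_x^\pi(k),\mathcal{A})=0\}$. Let $\alpha:\mathbb{R}^n\to\mathbb{R}_+$ be continuous with $\underline{\alpha}\,\mathrm{dist}(x,\mathcal{A})^{\bar p}\le\alpha(x)\le\overline{\alpha}\,\mathrm{dist}(x,\mathcal{A})^{\bar p}$, constants $\underline{\alpha},\overline{\alpha}>0$, $\bar p\ge p$. Define $\Psi(X):=\inf_{y\in X}\alpha(y)$ and $\mathcal{V}(X):=\sum_{k=0}^\infty\Psi(\mathcal{R}(X,k))\in[0,\infty]$. *)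

(* Defs.v *)
From HB Require Import structures.
From mathcomp Require Import all_boot all_order all_algebra.
From mathcomp Require Import all_classical all_reals all_analysis.
Set Implicit Arguments. Unset Strict Implicit. Unset Printing Implicit Defensive.
Import Order.TTheory GRing.Theory Num.Theory.
Import numFieldNormedType.Exports.
Local Open Scope classical_set_scope.
Local Open Scope ring_scope.

Definition is_norm (R : realType) (n : nat) (N : 'rV[R]_n -> R) : Prop :=
  [/\ forall x, N x = 0 -> x = 0,
      forall (a : R) x, N (a *: x) = `|a| * N x
    & forall x y, N (x + y) <= N x + N y].

Definition dist (R : realType) (n : nat) (N : 'rV[R]_n -> R)
  (x : 'rV[R]_n) (Om : set 'rV[R]_n) : R :=
  inf [set N (x - y) | y in Om].

Definition hausdorff (R : realType) (n : nat) (N : 'rV[R]_n -> R)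
  (X Y : set 'rV[R]_n) : R :=
  Num.max (sup [set dist N x Y | x in X]) (sup [set dist N y X | y in Y]).

Definition nonempty_compact (R : realType) (n : nat) (X : set 'rV[R]_n) : Prop :=
  compact X /\ X !=set0.

Definition admissible (R : realType) (m : nat) (U : set 'rV[R]_m)
  (pi : nat -> 'rV[R]_m) : Prop := forall k, U (pi k).

Fixpoint traj (R : realType) (n m : nat) (f : 'rV[R]_n -> 'rV[R]_m -> 'rV[R]_n)
  (x : 'rV[R]_n) (pi : nat -> 'rV[R]_m) (k : nat) : 'rV[R]_n :=
  match k with
  | 0%N => x
  | k'.+1 => f (traj f x pi k') (pi k')
  end.

Definition reach (R : realType) (n m : nat) (f : 'rV[R]_n -> 'rV[R]_m -> 'rV[R]_n)
  (U : set 'rV[R]_m) (X : set 'rV[R]_n) (k : nat) : set 'rV[R]_n :=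
  [set z | exists x, exists pi, [/\ X x, admissible U pi & z = traj f x pi k]].

Definition controlled_invariant (R : realType) (n m : nat)
  (f : 'rV[R]_n -> 'rV[R]_m -> 'rV[R]_n) (U : set 'rV[R]_m) (A : set 'rV[R]_n) : Prop :=
  forall x, A x -> exists u, U u /\ A (f x u).

Definition lp_stabilizable (R : realType) (n m : nat) (N : 'rV[R]_n -> R)
  (f : 'rV[R]_n -> 'rV[R]_m -> 'rV[R]_n) (U : set 'rV[R]_m) (A : set 'rV[R]_n)
  (r M p : R) (lam : R -> nat -> R) : Prop :=
  [/\ 0 < r, 1 <= M & 0 < p] /\
      (forall s k, 0 <= s <= r -> 0 <= lam s k) /\
      (forall k, {within `[0, r], continuous (fun s => lam s k)}) /\
      (forall k s t, 0 <= s -> s <= t -> t <= r -> lam s k <= lam t k) /\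
      (forall k, lam 0 k = 0) /\
      (forall s, 0 <= s <= r -> forall k l, (k <= l)%N -> lam s l <= lam s k) /\
      (forall s, 0 <= s <= r -> lam s 0%N <= s) /\
      ((\sum_(0 <= k <oo) ((lam r k) `^ p)%:E) < +oo)%E /\
      (forall x, dist N x A <= r ->
         exists pi, admissible U pi /\
           forall k, dist N (traj f x pi k) A <= M * lam (dist N x A) k).

Definition attraction_domain (R : realType) (n m : nat) (N : 'rV[R]_n -> R)
  (f : 'rV[R]_n -> 'rV[R]_m -> 'rV[R]_n) (U : set 'rV[R]_m) (A : set 'rV[R]_n)
  : set 'rV[R]_n :=
  [set x | exists pi, admissible U pi /\
     (fun k => dist N (traj f x pi k) A) @ \oo --> (0 : R)].

Definition Psi (R : realType) (n : nat) (alpha : 'rV[R]_n -> R) (X : set 'rV[R]_n) : R :=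
  inf [set alpha y | y in X].

Definition Vfun (R : realType) (n m : nat) (f : 'rV[R]_n -> 'rV[R]_m -> 'rV[R]_n)
  (U : set 'rV[R]_m) (alpha : 'rV[R]_n -> R) (X : set 'rV[R]_n) : \bar R :=
  (\sum_(0 <= k <oo) (Psi alpha (reach f U X k))%:E)%E.

(* Main.v *)
Require Import Defs.
From HB Require Import structures.
From mathcomp Require Import all_boot all_order all_algebra.
From mathcomp Require Import all_classical all_reals all_analysis.
From mathcomp Require Import ring lra.
Import Order.TTheory GRing.Theory Num.Theory.
Import numFieldNormedType.Exports.
Local Open Scope classical_set_scope.
Local Open Scope ring_scope.

Section NormFacts.
Variables (R : realType) (n : nat) (N : 'rV[R]_n -> R).
Hypothesis hN : [/\ forall x, N x = 0 -> x = 0,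
      forall (a : R) x, N (a *: x) = `|a| * N x
    & forall x y, N (x + y) <= N x + N y].

Lemma N0 : N 0 = 0.
Proof. case: hN => _ hZ _; by rewrite -(scale0r (0 : 'rV[R]_n)) hZ normr0 mul0r. Qed.

Lemma NN x : N (- x) = N x.
Proof. case: hN => _ hZ _; by rewrite -scaleN1r hZ normrN normr1 mul1r. Qed.

Lemma Nge0 x : 0 <= N x.
Proof.
case: hN => _ _ hD.
have := hD x (- x); rewrite subrr N0 NN => h.
by rewrite -(pmulr_rge0 _ (ltr0n R 2)) mulr2n mulrDl mul1r.
Qed.

Lemma NB x y : N (x - y) = N (y - x).
Proof. by rewrite -NN opprB. Qed.

Lemma Nsum (I : Type) (r : seq I) (F : I -> 'rV[R]_n) :
  N (\sum_(i <- r) F i) <= \sum_(i <- r) N (F i).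
Proof.
case: hN => _ _ hD.
elim: r => [|a r IH]; first by rewrite !big_nil N0.
rewrite !big_cons; apply: le_trans (hD _ _) _; exact: lerD.
Qed.

Lemma entry_le (v : 'rV[R]_n) j : `|v 0 j| <= `|v|.
Proof.
have -> : `|v| = mx_norm v by [].
rewrite mx_normrE.
exact: (le_bigmax _ (fun ij : 'I_1 * 'I_n => `|v ij.1 ij.2|) (0, j)).
Qed.

Lemma Nup : exists2 C, 0 < C & forall v, N v <= C * `|v|.
Proof.
case: hN => _ hZ _.
exists (1 + \sum_(j < n) N 'e_j).
  by rewrite ltr_wpDr // sumr_ge0 // => j _; exact: Nge0.
move=> v; rewrite {1}(row_sum_delta v).
apply: le_trans (Nsum _ _ _) _.
apply: (@le_trans _ _ ((\sum_(j < n) N 'e_j) * `|v|)).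
  rewrite mulr_suml; apply: ler_sum => j _; rewrite hZ mulrC.
  apply: ler_wpM2l; [exact: Nge0 | exact: entry_le].
by rewrite ler_wpM2r // lerDr.
Qed.

Lemma Nlip x y : `|N x - N y| <= N (x - y).
Proof.
case: hN => _ _ hD.
have h1 := hD (y - x) x; rewrite subrK NB in h1.
have h2 := hD (x - y) y; rewrite subrK in h2.
rewrite ler_norml; apply/andP; split; lra.
Qed.

Lemma Ncont : continuous N.
Proof.
have [C C0 hC] := Nup.
move=> x; apply: (proj2 (@cvgrPdist_lt _ _ _ (nbhs x) _ N (N x))) => e e0.
apply/nbhs_ballP; exists (e / C) => /=; first by rewrite divr_gt0.
move=> y; rewrite -ball_normE /= => xy.
apply: le_lt_trans (Nlip _ _) _.
apply: le_lt_trans (hC _) _.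
by rewrite -ltr_pdivlMl // mulrC.
Qed.

Lemma Nlow : exists2 c, 0 < c & forall v, c * `|v| <= N v.
Proof.
case: hN => h0 hZ _.
pose S := [set v : 'rV[R]_n | `|v| = 1].
have cS : compact S.
  apply: bounded_closed_compact.
    exists 1; split; first by rewrite num_real.
    move=> M M1 v; rewrite /S /= => ->; exact: ltW.
  have h := (proj1 (@continuous_closedP 'rV[R]_n R Num.Def.normr) (@norm_continuous R 'rV[R]_n) [set x | x = 1] (@closed_eq R 1)).
  exact: h.
have [[v0 Sv0]|S0] := pselect (S !=set0).
  have [c Sc hc] := EVT_min_rV (ex_intro _ v0 Sv0) cS
    (continuous_subspaceT Ncont).
  have cS' : S c by move: Sc; rewrite inE.
  have c0 : 0 < N c.
    rewrite lt0r Nge0 andbT; apply/eqP => /h0 c00.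
    by move: cS'; rewrite /S /= c00 normr0 => /esym/eqP; rewrite oner_eq0.
  exists (N c) => // v.
  have [->|vn0] := eqVneq v 0; first by rewrite normr0 mulr0 Nge0.
  have nv0 : 0 < `|v| by rewrite normr_gt0.
  have : S (`|v|^-1 *: v).
    by rewrite /S /= normrZ normrV ?unitfE ?normr_eq0 // normr_id mulVf // gt_eqF.
  move=> Sw.
  have := hc _ (mem_set Sw); rewrite hZ normrV ?unitfE ?normr_eq0 // normr_id.
  by rewrite ler_pdivlMl // mulrC.
exists 1 => // v; rewrite mul1r.
have [->|vn0] := eqVneq v 0; first by rewrite normr0 Nge0.
exfalso; apply: S0; exists (`|v|^-1 *: v).
by rewrite /S /= normrZ normrV ?unitfE ?normr_eq0 // normr_id mulVf // normr_eq0.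
Qed.

End NormFacts.

Section Unif.
Variable R : realType.

Lemma unif_cont (T V : pseudoMetricType R) (g : T -> V) (K : set T) :
  compact K -> continuous g -> forall e, 0 < e ->
  exists2 d, 0 < d & forall x y, K x -> ball x d y -> ball (g x) e (g y).
Proof.
move=> cK gc e e0.
have e20 : 0 < e / 2 by rewrite divr_gt0.
have H : forall x, K x -> \forall x' \near x & d \near (0:R)^'+,
    forall y, ball x' d y -> ball (g x') e (g y).
  move=> x Kx.
  have : nbhs x (g @^-1` ball (g x) (e / 2)) by apply: gc; exact: nbhsx_ballx.
  case/nbhs_ballP => eta /= eta0 heta.
  have eta20 : 0 < eta / 2 by rewrite divr_gt0.
  exists (ball x (eta / 2), [set d | d < eta / 2]); first split.
  - exact: nbhsx_ballx.
  - exact: nbhs_right_lt.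
  case=> x' d /= [hx' hd] y hy.
  have h1 : ball (g x) (e / 2) (g x').
    by apply: heta; apply: (le_ball _ hx'); rewrite ler_pdivrMr // ler_pMr // ler1n.
  have h2 : ball (g x) (e / 2) (g y).
    apply: heta; rewrite [eta](splitr eta).
    apply: (ball_triangle hx'); exact: (le_ball (ltW hd) hy).
  rewrite [e](splitr e); exact: (ball_triangle (ball_sym h1) h2).
have FD := (proj1 (compact_near_coveringP K) cK R (nbhs (0:R)^'+)
  (fun d x => forall y, ball x d y -> ball (g x) e (g y)) _ H).
have [d [d0 hd]] := filter_ex (filterI (nbhs_right_gt 0) (FD _)).
exists d => // x y Kx; exact: (hd x Kx).
Qed.

End Unif.

Section DistFacts.
Variables (R : realType) (n : nat) (N : 'rV[R]_n -> R).
Hypothesis hN : is_norm N.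
Variable A : set 'rV[R]_n.
Hypothesis A0 : A !=set0.

Lemma dist_img_inf x : has_inf [set N (x - y) | y in A].
Proof.
split; first by case: A0 => a Aa; exists (N (x - a)); exists a.
by exists 0 => _ [y _ <-]; exact: Nge0.
Qed.

Lemma dist_ge0 x : 0 <= dist N x A.
Proof.
apply: lb_le_inf; first exact: (proj1 (dist_img_inf x)).
by move=> _ [y _ <-]; exact: Nge0.
Qed.

Lemma dist_le x a : A a -> dist N x A <= N (x - a).
Proof.
by move=> Aa; apply: (ge_inf (proj2 (dist_img_inf x))); exists a.
Qed.

Lemma dist_lt x e : dist N x A < e -> exists2 a, A a & N (x - a) < e.
Proof.
move=> he.
have he' : 0 < e - dist N x A by rewrite subr_gt0.
have [_ [a Aa <-] ha] := inf_adherent he' (dist_img_inf x).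
by exists a => //; move: ha; rewrite /dist; lra.
Qed.

Lemma dist_tri x y : dist N x A <= N (x - y) + dist N y A.
Proof.
suff h : dist N x A - N (x - y) <= dist N y A by lra.
apply: lb_le_inf; first exact: (proj1 (dist_img_inf y)).
move=> _ [a Aa <-].
have h1 := @dist_le x a Aa.

case: hN => _ _ hD.
have h2 := hD (x - y) (y - a).
have e : x - y + (y - a) = x - a by rewrite addrA subrK.
rewrite e in h2; lra.
Qed.

End DistFacts.

Section Traj.
Variables (R : realType) (n m : nat) (f : 'rV[R]_n -> 'rV[R]_m -> 'rV[R]_n).

Lemma traj_S x pi j :
  traj f x pi j.+1 = traj f (f x (pi 0%N)) (fun i => pi i.+1) j.
Proof. by elim: j => //= j ->. Qed.

Definition catpi (pi : nat -> 'rV[R]_m) k (sg : nat -> 'rV[R]_m) :=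
  fun i => if (i < k)%N then pi i else sg (i - k)%N.

Lemma traj_cat_le x pi k sg i : (i <= k)%N ->
  traj f x (catpi pi k sg) i = traj f x pi i.
Proof.
elim: i => //= i IH hi; rewrite IH ?(ltnW hi) //.
by rewrite /catpi hi.
Qed.

Lemma traj_cat x pi k sg j :
  traj f x (catpi pi k sg) (j + k) = traj f (traj f x pi k) sg j.
Proof.
elim: j => /= [|j IH]; first exact: traj_cat_le.
rewrite IH /catpi ltnNge leq_addl /=.
by rewrite addnK.
Qed.

End Traj.

Arguments catpi {R m}.
Arguments N0 {R n N}. Arguments NN {R n N}. Arguments Nge0 {R n N}.
Arguments NB {R n N}. Arguments Nsum {R n N}. Arguments Nup {R n N}.
Arguments Nlip {R n N}. Arguments Ncont {R n N}. Arguments Nlow {R n N}.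
Arguments dist_ge0 {R n N} hN {A} A0. Arguments dist_le {R n N} hN {A} A0.
Arguments dist_lt {R n N} hN {A} A0. Arguments dist_tri {R n N} hN {A} A0.
Arguments dist_img_inf {R n N} hN {A} A0.
Local Open Scope ereal_scope.

Lemma lam_to0 (R : realType) (lam : R -> nat -> R) (r p : R) :
  (0 < p)%R -> (forall k, 0 <= lam r k)%R ->
  (\sum_(0 <= k <oo) ((lam r k) `^ p)%:E < +oo) ->
  lam r k @[k --> \oo] --> 0%R.
Proof.
move=> p0 l0 hs.
have u0 : forall k, true -> 0 <= ((lam r k) `^ p)%:E by move=> k _; rewrite lee_fin powR_ge0.
have tl := nneseries_tail_cvg hs u0.
have ub : forall k, ((lam r k) `^ p)%:E <= \sum_(k <= i <oo) ((lam r i) `^ p)%:E.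
  move=> k; have := @nneseries_lim_ge R (fun i => ((lam r i) `^ p)%:E) xpredT k k.+1.
  by rewrite big_nat1; apply => i _ _; rewrite lee_fin powR_ge0.
have [fin tlr] := proj1 (fine_cvgP _ _) tl.
apply/cvgrPdist_lt => e e0.
have ep0 : (0 < e `^ p)%R by rewrite powR_gt0.
have h1 := cvgr_dist_lt _ _ tlr _ ep0.
apply: filterS2 fin (h1 _) => k fk hk.
rewrite sub0r normrN ger0_norm //.
rewrite ltNge; apply/negP => hle.
have ea : e \in Num.nneg by rewrite nnegrE ltW.
have la : lam r k \in Num.nneg by rewrite nnegrE l0.
have h3 := @ge0_ler_powR R p (ltW p0) e (lam r k) ea la hle.
have h4 := ub k; rewrite -(fineK fk) lee_fin in h4.
move: hk; rewrite /= sub0r normrN => hk.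
have h5 := ler_norm (fine (\sum_(k <= i <oo) ((lam r i) `^ p)%:E)).
set t := fine _ in h4 h5 hk.
have : (t < e `^ p)%R by apply: le_lt_trans h5 hk.
move=> h6; have := le_lt_trans (le_trans h3 h4) h6; by rewrite ltxx.
Qed.

Local Close Scope ereal_scope.

Section System.
Variables (R : realType) (n m : nat) (N : 'rV[R]_n -> R)
  (f : 'rV[R]_n -> 'rV[R]_m -> 'rV[R]_n) (U : set 'rV[R]_m) (A : set 'rV[R]_n)
  (r M p : R) (lam : R -> nat -> R).
Hypothesis hN : is_norm N.
Hypothesis A0 : A !=set0.
Hypothesis hS : lp_stabilizable N f U A r M p lam.

Let D := attraction_domain N f U A.

Lemma escape x : ~ D x -> forall pi, admissible U pi ->
  forall k, r < dist N (traj f x pi k) A.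
Proof.
case: hS => [[r0 M1 p0] [lam0 [_ [lammon [_ [_ [_ [hsum stab]]]]]]]].
have l0 : forall k, 0 <= lam r k by move=> k; apply: lam0; rewrite lexx ltW.
have lt0 := @lam_to0 R lam r p p0 l0 hsum.
move=> nD pi hpi k; rewrite ltNge; apply/negP => hle; apply: nD.
have [sg [hsg hst]] := stab _ hle.
set z := traj f x pi k in hle hst.
exists (catpi pi k sg); split.
  by move=> i; rewrite /catpi; case: ifP => _; [exact: hpi | exact: hsg].
rewrite -(cvg_shiftn k).
have -> : (fun i => dist N (traj f x (catpi pi k sg) (i + k)) A) =
          (fun j => dist N (traj f z sg j) A).
  by apply: funext => j; rewrite traj_cat.
apply/cvgrPdist_lt => e e0.
have M0 : 0 < M by apply: lt_le_trans M1.
have eM : 0 < e / M by rewrite divr_gt0.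
apply: filterS (cvgr_dist_lt _ _ lt0 _ eM) => j hj.
rewrite sub0r normrN ger0_norm ?dist_ge0 //.
rewrite sub0r normrN ger0_norm ?l0 // in hj.
have hj' : M * lam r j < e by rewrite mulrC -ltr_pdivlMr.
apply: le_lt_trans (hst j) _.
apply: le_lt_trans _ hj'; apply: ler_wpM2l; first exact: ltW.
apply: lammon => //; exact: dist_ge0.
Qed.

Lemma step_good x u : U u -> D (f x u) -> D x.
Proof.
move=> Uu [sg [hsg hc]].
exists (fun i => if i is i'.+1 then sg i' else u); split.
  by case.
rewrite -cvg_shiftS.
have -> : (fun i => dist N (traj f x (fun i => if i is i'.+1 then sg i' else u) i.+1) A) =
          (fun j => dist N (traj f (f x u) sg j) A).
  by apply: funext => j; rewrite traj_S.
exact: hc.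
Qed.

Hypothesis fc : continuous (fun q : 'rV[R]_n * 'rV[R]_m => f q.1 q.2).

Lemma F3N (Y : set 'rV[R]_n) : compact Y -> compact U -> forall e, 0 < e ->
  exists2 d, 0 < d & forall x u y, Y x -> U u -> N (y - x) < d ->
    N (f y u - f x u) < e.
Proof.
move=> cY cU e e0.
have [C C0 hC] := Nup hN.
have [c c0 hc] := Nlow hN.
have eC : 0 < e / C by rewrite divr_gt0.
have [d d0 hd] := @unif_cont R _ _ _ _ (compact_setX cY cU) fc _ eC.
exists (c * d); first by rewrite mulr_gt0.
move=> x u y Yx Uu hxy.
have b : ball (x, u) d (y, u).
  split => /=; last exact: ballxx.
  rewrite -ball_normE /=.
  have := hc (x - y); rewrite (NB hN) => h.
  by rewrite -(ltr_pM2l c0); apply: le_lt_trans h hxy.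
have := hd (x, u) (y, u) (conj Yx Uu) b; rewrite -ball_normE /= => hb.
apply: le_lt_trans (hC _) _.
by rewrite -normrN opprB -ltr_pdivlMl // mulrC.
Qed.

End System.

Arguments N0 {R n N}. Arguments NN {R n N}. Arguments Nge0 {R n N}.
Arguments NB {R n N}. Arguments Nsum {R n N}. Arguments Nup {R n N}.
Arguments Nlip {R n N}. Arguments Ncont {R n N}. Arguments Nlow {R n N}.
Arguments dist_ge0 {R n N} hN {A} A0. Arguments dist_le {R n N} hN {A} A0.
Arguments dist_lt {R n N} hN {A} A0. Arguments dist_tri {R n N} hN {A} A0.
Arguments dist_img_inf {R n N} hN {A} A0.

Section Main.
Variables (R : realType) (n m : nat) (N : 'rV[R]_n -> R)
  (f : 'rV[R]_n -> 'rV[R]_m -> 'rV[R]_n) (U : set 'rV[R]_m) (A : set 'rV[R]_n)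
  (r M p : R) (lam : R -> nat -> R).
Hypothesis hN : is_norm N.
Hypothesis A0 : A !=set0.
Hypothesis hS : lp_stabilizable N f U A r M p lam.
Hypothesis fc : continuous (fun q : 'rV[R]_n * 'rV[R]_m => f q.1 q.2).
Hypothesis cU : compact U.

Let D := attraction_domain N f U A.

Lemma r_gt0 : 0 < r. Proof. by case: hS => [[]]. Qed.

Hypothesis U0 : U !=set0.

Lemma base_case (Y : set 'rV[R]_n) x y : (forall z, Y z -> ~ D z) -> Y x ->
  N (y - x) < r / 2 -> r / 2 < dist N y A.
Proof.
move=> hY Yx hxy.
case: U0 => u0 Uu0.
have := @escape R n m N f U A r M p lam hN A0 hS x (hY x Yx) (fun _ => u0) (fun _ => Uu0) 0%N.
rewrite /= => hx.
have := dist_tri hN A0 x y; rewrite (NB hN) => h.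
lra.
Qed.

Lemma Qk K : forall Y : set 'rV[R]_n, compact Y -> (forall z, Y z -> ~ D z) ->
  exists2 d, 0 < d & forall x y pi, Y x -> N (y - x) < d -> admissible U pi ->
    forall k, (k <= K)%N -> r / 2 < dist N (traj f y pi k) A.
Proof.
have r0 := r_gt0.
elim: K => [|K IH] Y cY hY.
  exists (r / 2); first by rewrite divr_gt0.
  move=> x y pi Yx hxy hpi [|//] _ /=; exact: (@base_case Y x y hY Yx).
pose Y' := (fun q : 'rV[R]_n * 'rV[R]_m => f q.1 q.2) @` (Y `*` U).
have cY' : compact Y'.
  exact: continuous_compact (continuous_subspaceT fc) (compact_setX cY cU).
have hY' : forall z, Y' z -> ~ D z.
  move=> _ [[x u] [/= Yx Uu] <-] Dz; apply: (hY x Yx).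
  exact: (@step_good R n m N f U A x u Uu Dz).
have [d' d'0 hd'] := IH Y' cY' hY'.
have [d1 d10 hd1] := @F3N R n m N f U hN fc Y cY cU d' d'0.
exists (Num.min d1 (r / 2)); first by rewrite lt_min d10 divr_gt0.
move=> x y pi Yx hxy hpi [|k] hk.
  apply: (@base_case Y x y hY Yx); apply: lt_le_trans hxy _; by rewrite ge_min lexx orbT.
rewrite traj_S.
apply: (hd' (f x (pi 0%N))).
- by exists (x, pi 0%N) => //; split => //; exact: hpi.
- apply: hd1 => //; apply: lt_le_trans hxy _; by rewrite ge_min lexx.
- by move=> i; exact: hpi.
- by [].
Qed.

End Main.

Arguments N0 {R n N}. Arguments NN {R n N}. Arguments Nge0 {R n N}.
Arguments NB {R n N}. Arguments Nsum {R n N}. Arguments Nup {R n N}.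
Arguments Nlip {R n N}. Arguments Ncont {R n N}. Arguments Nlow {R n N}.
Arguments dist_ge0 {R n N} hN {A} A0. Arguments dist_le {R n N} hN {A} A0.
Arguments dist_lt {R n N} hN {A} A0. Arguments dist_tri {R n N} hN {A} A0.
Arguments dist_img_inf {R n N} hN {A} A0.

Theorem theorem8 (R : realType) (n m : nat) (N : 'rV[R]_n -> R)
  (f : 'rV[R]_n -> 'rV[R]_m -> 'rV[R]_n) (U : set 'rV[R]_m) (A : set 'rV[R]_n)
  (r M p : R) (lam : R -> nat -> R)
  (alpha : 'rV[R]_n -> R) (alo ahi pbar : R)
  (X : set 'rV[R]_n) (Xs : nat -> set 'rV[R]_n) :
  is_norm N ->
  continuous (fun q : 'rV[R]_n * 'rV[R]_m => f q.1 q.2) ->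
  nonempty_compact U ->
  nonempty_compact A ->
  controlled_invariant f U A ->
  lp_stabilizable N f U A r M p lam ->
  continuous alpha ->
  0 < alo -> 0 < ahi -> p <= pbar ->
  (forall x, alo * (dist N x A) `^ pbar <= alpha x /\
             alpha x <= ahi * (dist N x A) `^ pbar) ->
  nonempty_compact X ->
  X `&` attraction_domain N f U A = set0 ->
  (forall k, nonempty_compact (Xs k)) ->
  (fun k => hausdorff N (Xs k) X) @ \oo --> (0 : R) ->
  (fun k => Vfun f U alpha (Xs k)) @ \oo --> +oo%E.
Proof.
move=> hN fc [cU U0] [cA A0] _ hS ac alo0 ahi0 ppbar halpha [cX X0] XD hXs hH.
have r0 : 0 < r by case: hS => [[]].
have p0 : 0 < p by case: hS => [[]].
have pb0 : 0 <= pbar by lra.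
have noD : forall z, X z -> ~ attraction_domain N f U A z.
  by move=> z Xz Dz; have : (X `&` attraction_domain N f U A) z by [];
     rewrite XD.
set c0 := alo * (r / 2) `^ pbar.
have c00 : 0 < c0 by rewrite mulr_gt0 // powR_gt0 // divr_gt0.
apply/cvgeyPge => B.
set K := Num.truncn (B / c0).
have hK : B < K.+1%:R * c0.
  by rewrite -ltr_pdivrMr //; exact: truncnS_gt.
have [d d0 hd] := @Qk R n m N f U A r M p lam hN A0 hS fc cU U0 K X cX noD.
apply: filterS (cvgr_dist_lt _ _ hH _ d0) => j hj.
have [cXj Xj0] := hXs j.
have hdist : forall y, Xs j y -> exists2 x, X x & N (y - x) < d.
  move=> y Xjy.
  have hub : has_ubound [set dist N y' X | y' in Xs j].
    have [C C0 hC] := Nup hN.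
    case: (X0) => x0 Xx0.
    case: (compact_bounded cXj) => M0 [_ hM0].
    exists (C * (M0 + 1 + `|x0|)) => _ [y' Xjy' <-].
    apply: le_trans (dist_le hN X0 y' x0 Xx0) _.
    apply: le_trans (hC _) _; apply: ler_wpM2l; first exact: ltW.
    apply: le_trans (ler_normB _ _) _; apply: lerD => //.
    have hM : M0 < M0 + 1 by rewrite ltrDl ltr01.
    by have := hM0 (M0 + 1) hM y' Xjy'.
  have h1 : dist N y X <= sup [set dist N y' X | y' in Xs j].
    by apply: (ub_le_sup hub); exists y.
  have h2 : sup [set dist N y' X | y' in Xs j] <= hausdorff N (Xs j) X.
    by rewrite /hausdorff le_max lexx.
  have h3 : hausdorff N (Xs j) X < d.
    by move: hj; rewrite sub0r normrN; apply: le_lt_trans (ler_norm _).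
  have h4 : dist N y X < d by apply: le_lt_trans h3; apply: le_trans h2.
  exact: (dist_lt hN X0 y d h4).
have reach0 : forall k, [set alpha y | y in reach f U (Xs j) k] !=set0.
  move=> k; case: Xj0 => y0 Xjy0; case: U0 => u0 Uu0.
  exists (alpha (traj f y0 (fun _ => u0) k)); exists (traj f y0 (fun _ => u0) k) => //.
  by exists y0, (fun _ => u0); split.
have Psi0 : forall k, 0 <= Psi alpha (reach f U (Xs j) k).
  move=> k; apply: lb_le_inf; first exact: reach0.
  move=> _ [z _ <-]; apply: le_trans (halpha z).1.
  by rewrite mulr_ge0 ?powR_ge0 // ltW.
have Psi_ge : forall k, (k <= K)%N -> c0 <= Psi alpha (reach f U (Xs j) k).
  move=> k hk; apply: lb_le_inf; first exact: reach0.
  move=> _ [z [y [pi [Xjy hpi ->]]] <-].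
  have [x Xx hxy] := hdist y Xjy.
  have hz := hd x y pi Xx hxy hpi k hk.
  apply: le_trans (halpha _).1.
  rewrite /c0; apply: ler_wpM2l; first exact: ltW.
  apply: ge0_ler_powR => //; last exact: ltW.
  - by rewrite nnegrE divr_ge0 // ltW.
  - by rewrite nnegrE (le_trans _ (ltW hz)) // divr_ge0 // ltW.
rewrite /Vfun.
apply: le_trans (nneseries_lim_ge K.+1 _).
  rewrite sumEFin lee_fin.
  apply: (@le_trans _ _ (\sum_(i < K.+1) c0)).
    by rewrite sumr_const card_ord -mulr_natl; exact: ltW.
  rewrite big_mkord; apply: ler_sum => i _; apply: Psi_ge; rewrite -ltnS; exact: ltn_ord.
by move=> i _ _; rewrite lee_fin.
Qed.
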